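(* Let $a,b\geq0$, $0\leq j\leq b$ and $n\geq b+1$ be integers. Then $\{H_{a+1+j}E_{b-j}\}_n$ equals the number of pairs $(\lambda,\mu)$ such that (1) $\lambda=(\lambda_1,\dotsc,\lambda_{b-j})$ with $\lambda_1\geq\cdots\geq\lambda_{b-j}\geq0$; (2) $\mu=(\mu_1,\dotsc,\mu_{n-b+j})$ with $\mu_1>\cdots>\mu_{n-b+j}\geq0$; (3) $\sum_i\lambda_i+\sum_i\mu_i=a+1+j$.
   Context: For $i\geq1$, $X_i(\sigma)$ is the number of $i$-cycles of $\sigma$. For a partition $\alpha=1^{a_1}2^{a_2}\cdots$ ($a_i$ = number of parts equal to $i$, $|\alpha|=\sum ia_i$, $l(\alpha)=\sum a_i$) let $\binom X\alpha=\prod_i\binom{X_i}{a_i}$ and $\left(\!\binom X\alpha\!\right)=\prod_i\binom{X_i+a_i-1}{a_i}$. Define $H_k=\sum_{\alpha\vdash k}\left(\!\binom X\alpha\!\right)$ and $E_l=\sum_{\alpha\vdash l}(-1)^{|\alpha|-l(\alpha)}\binom X\alpha$ ($H_0=E_0=1$). The signed moment of $p\in\mathbb C[X_1,X_2,\dotsc]$ is $\{p\}_n=\frac1{n!}\sum_{\sigma\in S_n}\mathrm{sgn}(\sigma)p(X_1(\sigma),X_2(\sigma),\dotsc)$. *)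

(* Defs.v *)
From mathcomp Require Import all_boot all_order all_algebra all_fingroup.
Set Implicit Arguments. Unset Strict Implicit. Unset Printing Implicit Defensive.
Import GRing.Theory Num.Theory.
Local Open Scope ring_scope.

Definition cyc_count (n : nat) (s : {perm 'I_n}) : nat -> nat :=
  fun i => #|[set C in porbits s | #|C| == i]|.

(* Partitions alpha of k, encoded by multiplicity vectors a (a_i = number of
   parts equal to i, 1 <= i <= k; a_0 = 0), so that |alpha| = sum_i i a_i = k. *)
Definition is_part (k : nat) (a : {ffun 'I_k.+1 -> 'I_k.+1}) : bool :=
  (val (a ord0) == 0%N) && (\sum_(i < k.+1) i * a i == k)%N.

Definition part_len (k : nat) (a : {ffun 'I_k.+1 -> 'I_k.+1}) : nat :=
  (\sum_(i < k.+1) a i)%N.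

(* H_k = sum_{alpha |- k} prod_i ((X_i multichoose a_i)) = prod_i C(X_i+a_i-1, a_i) *)
Definition Hpoly (k : nat) (X : nat -> nat) : rat :=
  \sum_(a : {ffun 'I_k.+1 -> 'I_k.+1} | is_part a)
     \prod_(i < k.+1) ('C(X i + a i - 1, a i))%:R.

Definition Epoly (l : nat) (X : nat -> nat) : rat :=
  \sum_(a : {ffun 'I_l.+1 -> 'I_l.+1} | is_part a)
     (-1) ^+ (l - part_len a)%N * \prod_(i < l.+1) ('C(X i, a i))%:R.

Definition smoment (n : nat) (p : (nat -> nat) -> rat) : rat :=
  (n`!%:R)^-1 * \sum_(s : {perm 'I_n}) (-1) ^+ odd_perm s * p (cyc_count s).

(* Entries are
   automatically <= N, so they are taken in 'I_N.+1 without loss. *)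
Definition pair_count (m r N : nat) : nat :=
  #|[set p : (m.-tuple 'I_N.+1 * r.-tuple 'I_N.+1) |
      [&& sorted geq (map val p.1), sorted gtn (map val p.2) &
          (sumn (map val p.1) + sumn (map val p.2) == N)%N]]|.

(* Main.v *)
Require Import Defs.
From mathcomp Require Import all_boot all_order all_algebra all_fingroup.
Import GRing.Theory Num.Theory.
Local Open Scope ring_scope.
From mathcomp Require Import zify.
Lemma coef_prod_sum (I J : finType) (c : I -> J -> rat) (w : I -> J -> nat) N :
  (\prod_(i : I) \sum_(j : J) c i j *: 'X^(w i j))`_N =
  \sum_(g : {ffun I -> J} | (\sum_i w i (g i))%N == N) \prod_i c i (g i).
Proof.
rewrite bigA_distr_bigA coef_sum [RHS]big_mkcond /=; apply: eq_bigr => g _.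
have -> : \prod_i (c i (g i) *: 'X^(w i (g i))) =
   (\prod_i c i (g i)) *: 'X^(\sum_i w i (g i)) :> {poly rat}.
  elim/big_rec3: _ => [|i s p x _ ->]; first by rewrite expr0 scale1r.
  by rewrite -scalerAl -scalerAr scalerA exprD.
by rewrite coefZ coefXn eq_sym; case: eqP => _; rewrite ?mulr1 ?mulr0.
Qed.

Definition eqtr (N : nat) (p q : {poly rat}) := forall k, (k <= N)%N -> p`_k = q`_k.

Lemma eqtr_refl N p : eqtr N p p. Proof. by []. Qed.
Lemma eqtr_sym N p q : eqtr N p q -> eqtr N q p.
Proof. by move=> h k hk; rewrite h. Qed.
Lemma eqtr_trans N p q r : eqtr N p q -> eqtr N q r -> eqtr N p r.
Proof. by move=> h1 h2 k hk; rewrite h1 ?h2. Qed.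

Lemma eqtrM N p1 q1 p2 q2 : eqtr N p1 q1 -> eqtr N p2 q2 -> eqtr N (p1 * p2) (q1 * q2).
Proof.
move=> h1 h2 k hk; rewrite !coefM; apply: eq_bigr => j _.
have hj : (j <= N)%N by apply: leq_trans hk; rewrite -ltnS.
by rewrite h1 // h2 // (leq_trans (leq_subr _ _) hk).
Qed.

Lemma eqtr_prod N (I : Type) (r : seq I) (P : pred I) (F G : I -> {poly rat}) :
  (forall i, P i -> eqtr N (F i) (G i)) ->
  eqtr N (\prod_(i <- r | P i) F i) (\prod_(i <- r | P i) G i).
Proof.
move=> h; apply: (big_ind2 (eqtr N)) => //; last exact: eqtrM.
Qed.

Lemma eqtrX N p q x : eqtr N p q -> eqtr N (p ^+ x) (q ^+ x).
Proof.
move=> h; elim: x => [|x IH]; first by rewrite !expr0.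
by rewrite !exprS; apply: eqtrM.
Qed.

Lemma eqtr_comp N p q i : (0 < i)%N -> eqtr N p q -> eqtr N (p \Po 'X^i) (q \Po 'X^i).
Proof.
move=> i0 h k hk; rewrite !coef_comp_poly_Xn //; case: ifP => // _.
by rewrite h // (leq_trans (leq_div _ _) hk).
Qed.

Lemma comp_poly_XnE K (d : nat -> rat) i :
  (\poly_(k < K) d k) \Po 'X^i = \sum_(k < K) d k *: 'X^(i * k).
Proof.
rewrite poly_def -[LHS]/(comp_poly 'X^i _) raddf_sum /=; apply: eq_bigr => k _.
by rewrite comp_polyZ comp_Xn_poly -exprM.
Qed.

Lemma hockey (x k : nat) : (\sum_(j < k.+1) 'C(x + j - 1, j) = 'C(x + k, k))%N.
Proof.
elim: k => [|k IH]; first by rewrite big_ord1 !bin0.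
by rewrite big_ord_recr /= IH addnS subn1 /= [in RHS]binS addnC.
Qed.

Definition Gpol N : {poly rat} := \poly_(k < N.+1) 1.

Lemma Gpol_pow N x :
  eqtr N (Gpol N ^+ x) (\poly_(k < N.+1) ('C(x + k - 1, k))%:R).
Proof.
elim: x => [|x IH].
  move=> k hk; rewrite expr0 coef1 coef_poly ltnS hk add0n.
  by case: k {hk} => [|k] //=; rewrite subn1 /= bin_small.
apply: eqtr_trans (_ : eqtr N (Gpol N * \poly_(k < N.+1) ('C(x + k - 1, k))%:R) _).
  by rewrite exprS; apply: eqtrM.
move=> k hk; rewrite coefM coef_poly ltnS hk.
rewrite (eq_bigr (fun j : 'I_k.+1 => ('C(x + (k - j) - 1, k - j))%:R)); last first.
  move=> j _; rewrite /Gpol !coef_poly.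
  have hj : (j < N.+1)%N by rewrite ltnS (leq_trans _ hk) // -ltnS.
  by rewrite hj mul1r ltnS (leq_trans (leq_subr _ _) hk).
rewrite -natr_sum; congr (_%:R).
rewrite (reindex_inj rev_ord_inj) /=.
rewrite (eq_bigr (fun j : 'I_k.+1 => 'C(x + j - 1, j))); last first.
  by move=> j _; rewrite subKn // -ltnS.
by rewrite hockey addSn subn1.
Qed.

Lemma lin_pow (c : rat) x k : ((1 + c *: 'X) ^+ x)`_k = c ^+ k * ('C(x, k))%:R.
Proof.
elim: x k => [|x IH] k.
  by rewrite expr0 coef1; case: k => [|k]; rewrite ?expr0 ?mulr1 ?bin0 // bin0n mulr0.
rewrite exprS mulrDl mul1r coefD -scalerAl coefZ coefXM IH.
case: k => [|k] /=; first by rewrite !bin0 mulr0 addr0.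
by rewrite IH binS natrD mulrDr exprS mulrA addrC.
Qed.

Arguments eqtr_sym {N p q}.
Arguments eqtr_trans {N p q r}.
Arguments eqtrM {N p1 q1 p2 q2}.
Arguments eqtr_comp {N p q i}.
Arguments eqtrX {N p q} x.
Lemma eqtr_tail N (U : nat -> {poly rat}) L K :
  (forall i, (L <= i)%N -> eqtr N (U i) 1) -> (L <= K)%N ->
  eqtr N (\prod_(i < K) U i) (\prod_(i < L) U i).
Proof.
move=> hU hLK; rewrite -!(big_mkord xpredT) (big_cat_nat (leq0n L) hLK) /=.
rewrite -[X in eqtr _ _ X]mulr1; apply: eqtrM => //.
apply: (@eqtr_trans _ _ (\prod_(L <= i < K | (L <= i < K)%N && true) 1)); last by rewrite big1_eq.
by rewrite big_nat_cond; apply: eqtr_prod => i /andP[/andP[hi _] _]; apply: hU.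
Qed.

Lemma group_coef N n (X : nat -> nat) (phi : nat -> {poly rat}) (D : nat -> nat -> rat) :
  X 0%N = 0%N -> (forall i, (n < i)%N -> X i = 0%N) ->
  (forall i, eqtr N (phi i ^+ X i) (\poly_(k < N.+1) D i k)) ->
  (forall i, D i 0%N = 1) ->
  (\prod_(i < n.+1) ((phi i \Po 'X^i) ^+ X i))`_N =
  \sum_(a : {ffun 'I_N.+1 -> 'I_N.+1} | (val (a ord0) == 0%N) &&
          ((\sum_(i < N.+1) i * a i)%N == N)) \prod_(i < N.+1) D i (a i).
Proof.
move=> X0 Xn hphi hD.
pose U i := if i == 0%N then 1 else (\poly_(k < N.+1) D i k) \Po 'X^i.
have step_b : eqtr N (\prod_(i < n.+1) ((phi i \Po 'X^i) ^+ X i)) (\prod_(i < n.+1) U i).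
  apply: eqtr_prod => i _; rewrite /U; case: eqP => [-> | /eqP i0].
    by rewrite X0 expr0.
  rewrite -[(phi i \Po 'X^i) ^+ X i]/(comp_poly 'X^i (phi i) ^+ X i) -rmorphXn /=.
  by apply: eqtr_comp; rewrite // lt0n.
have U1 : forall i, (0 < i)%N -> eqtr N ((\poly_(k < N.+1) D i k) \Po 'X^i) 1 ->
    eqtr N (U i) 1.
  by move=> i i0; rewrite /U; case: eqP => // ->.
have c1 : eqtr N (\prod_(i < n.+1) U i) (\prod_(i < n + N.+1) U i).
  apply: eqtr_sym; apply: eqtr_tail; last by rewrite addnS ltnS leq_addr.
  move=> i hi; apply: U1 => //; first exact: leq_ltn_trans hi.
  have := @eqtr_comp N _ _ i (leq_ltn_trans (leq0n n) hi) (eqtr_sym (hphi i)).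
  by rewrite Xn // expr0 -polyC1 comp_polyC.
have c2 : eqtr N (\prod_(i < n + N.+1) U i) (\prod_(i < N.+1) U i).
  apply: eqtr_tail; last by rewrite leq_addl.
  move=> i hi; apply: U1 => //; first exact: leq_ltn_trans hi.
  move=> k hk; rewrite coef_comp_poly_Xn ?(leq_ltn_trans (leq0n N) hi) // coef1.
  case: k hk => [|k] hk; first by rewrite dvdn0 div0n coef_poly hD.
  have -> : (i %| k.+1)%N = false.
    by apply/negP => /dvdn_leq h; have := leq_trans (h isT) hk; rewrite leqNgt hi.
  by [].
rewrite (step_b N) // (c1 N) // (c2 N) //.
have -> : \prod_(i < N.+1) U i = \prod_(i : 'I_N.+1) \sum_(k : 'I_N.+1)
    (if val i == 0%N then ((val k == 0%N)%:R : rat) else D i k) *: 'X^(i * k).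
  apply: eq_bigr => i _; rewrite /U; case: eqP => [i0 | _].
    rewrite (bigD1 ord0) //= big1 ?addr0 ?scale1r ?i0 ?expr0 //.
    by move=> k /negbTE; rewrite -val_eqE /= => ->; rewrite scale0r.
  by rewrite comp_poly_XnE.
rewrite coef_prod_sum [RHS]big_mkcond [LHS]big_mkcond /=; apply: eq_bigr => a _.
case: eqP => _; rewrite ?andbT ?andbF //.
case: ifP => [/eqP a0 | /negbT a0].
  apply: eq_bigr => i _; case: eqP => // i0.
  have -> : i = ord0 by apply: val_inj.
  by rewrite a0 /= hD.
by rewrite (bigD1 ord0) //= (negbTE a0) mul0r.
Qed.
Lemma Hpoly_coef N n (X : nat -> nat) : X 0%N = 0%N -> (forall i, (n < i)%N -> X i = 0%N) ->
  Hpoly N X = (\prod_(i < n.+1) ((Gpol N \Po 'X^i) ^+ X i))`_N.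
Proof.
move=> X0 Xn.
rewrite (@group_coef N n X (fun=> Gpol N) (fun i k => ('C(X i + k - 1, k))%:R)) //.
- by move=> i; apply: Gpol_pow.
- by move=> i; rewrite bin0.
Qed.

Lemma sign_sum (I : Type) (r : seq I) (P : pred I) (F : I -> nat) :
  \prod_(i <- r | P i) ((-1 : rat) ^+ F i) = (-1) ^+ (\sum_(i <- r | P i) F i)%N.
Proof.
by elim/big_rec2: _ => [|i x y _ ->]; rewrite ?expr0 // exprD.
Qed.

Definition Ephi (i : nat) : {poly rat} := 1 + ((-1) ^+ i.+1) *: 'X.

Lemma Epoly_coef N n (X : nat -> nat) : X 0%N = 0%N -> (forall i, (n < i)%N -> X i = 0%N) ->
  Epoly N X = (\prod_(i < n.+1) ((Ephi i \Po 'X^i) ^+ X i))`_N.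
Proof.
move=> X0 Xn.
rewrite (@group_coef N n X Ephi (fun i k => ((-1) ^+ i.+1) ^+ k * ('C(X i, k))%:R)) //; first last.
- by move=> i; rewrite expr0 bin0 mul1r.
- by move=> i k hk; rewrite /Ephi lin_pow coef_poly ltnS hk.
rewrite /Epoly; apply: eq_bigr => a /andP[/eqP a0 /eqP asum].
rewrite big_split /=; congr (_ * _).
rewrite (eq_bigr (fun i : 'I_N.+1 => (-1 : rat) ^+ (i.+1 * a i)%N)); last first.
  by move=> i _; rewrite exprM.
rewrite sign_sum.
have -> : (\sum_(i < N.+1) i.+1 * a i = N + part_len a)%N.
  rewrite /part_len -[X in (X + _)%N]asum -big_split; apply: eq_bigr => i _.
  by rewrite mulSn addnC.
have hl : (part_len a <= N)%N.
  rewrite -[X in (_ <= X)%N]asum /part_len; apply: leq_sum => i _.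
  case: (posnP i) => [i0 | ip].
    have -> : i = ord0 by apply: val_inj.
    have a0' : nat_of_ord (a ord0) = 0%N := a0.
    by rewrite a0'.
  exact: leq_pmull.
have -> : (N + part_len a = (N - part_len a) + (part_len a).*2)%N.
  by rewrite -addnn addnA subnK.
have e2 : (-1 : rat) ^+ 2 = 1 by rewrite expr2 mulrNN mulr1.
by rewrite exprD -mul2n exprM e2 expr1n mulr1.
Qed.
Section Orbits.
Variables (T : finType) (s : {perm T}).

Definition OT := {C in porbits s}.

Lemma porbit_in x : porbit s x \in porbits s.
Proof. by apply/imsetP; exists x. Qed.

Definition orbOf (x : T) : OT := Sub (porbit s x) (porbit_in x).

Lemma OT_ex (C : OT) : exists y, val C = porbit s y.
Proof. by case: C => C /= /imsetP[y _ ->]; exists y. Qed.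

Lemma mem_OT (C : OT) x : (x \in val C) = (orbOf x == C).
Proof.
have [y hy] := OT_ex C.
by rewrite -val_eqE /= hy eq_porbit_mem.
Qed.

Lemma orbOf_s x : orbOf (s x) = orbOf x.
Proof. by apply: val_inj => /=; have := porbit_perm s 1 x; rewrite expg1. Qed.

Lemma fixed_const (Y : Type) (F : T -> Y) :
  (forall x, F (s x) = F x) -> forall x y, y \in porbit s x -> F y = F x.
Proof.
move=> hF x y /porbitP[i ->]; elim: i => [|i IH]; first by rewrite expg0 perm1.
by rewrite expgSr permM hF.
Qed.

Lemma sum_orb (F : OT -> nat) :
  (\sum_x F (orbOf x) = \sum_(C : OT) #|val C| * F C)%N.
Proof.
rewrite (partition_big orbOf xpredT) //=; apply: eq_bigr => C _.
rewrite (eq_bigr (fun=> F C)); last by move=> x /eqP ->.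
rewrite sum_nat_const; congr (_ * _)%N; apply: eq_card => x.
by rewrite -[sval C]/(val C) mem_OT.
Qed.

Lemma card_orb_le (C : OT) : (#|val C| <= #|T|)%N.
Proof. exact: max_card. Qed.

Lemma group_prod (h : nat -> {poly rat}) K : (#|T| <= K)%N ->
  \prod_(C : OT) h #|val C| = \prod_(i < K.+1) h i ^+ #|[set C in porbits s | #|C| == i]|.
Proof.
move=> hK.
rewrite (partition_big (fun C : OT => (inord #|val C| : 'I_K.+1)) xpredT) //=.
apply: eq_bigr => i _.
have hC : forall C : OT, ((inord #|val C| : 'I_K.+1) == i) = (#|val C| == i).
  move=> C; rewrite -val_eqE /= inordK //.
  by rewrite ltnS (leq_trans _ hK) // card_orb_le.
rewrite (eq_bigl (fun C : OT => #|val C| == i)) //.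
rewrite (eq_bigr (fun=> h i)); last by move=> C /eqP ->.
rewrite prodr_const; congr (_ ^+ _).
rewrite -(card_imset _ val_inj); apply: eq_card => C.
apply/imsetP/idP => [[D hD ->] | ].
  by rewrite inE (valP D) /=; exact: hD.
rewrite inE => /andP[hCin hCi].
by exists (Sub C hCin) => //; exact: hCi.
Qed.

End Orbits.

Arguments OT {T} s.
Arguments orbOf {T} s x.
Arguments porbit_in {T} s x.
Arguments OT_ex {T s} C.
Arguments mem_OT {T s} C x.
Arguments orbOf_s {T s} x.
Arguments fixed_const {T s Y F}.
Arguments sum_orb {T s} F.
Arguments group_prod {T s} h K.
Section Counts.
Variables (T : finType) (s : {perm T}).

Lemma OT_exb (C : OT s) : exists y, val C == porbit s y.
Proof. by have [y hy] := OT_ex C; exists y; rewrite hy. Qed.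

Definition rep (C : OT s) : T := xchoose (OT_exb C).

Lemma rep_spec C : val C = porbit s (rep C).
Proof. exact/eqP/(xchooseP (OT_exb C)). Qed.

Lemma fixed_repr {Y : Type} {F : T -> Y} :
  (forall x, F (s x) = F x) -> forall x, F (rep (orbOf s x)) = F x.
Proof.
move=> hF x; apply: (fixed_const hF).
by rewrite -eq_porbit_mem -rep_spec.
Qed.

Lemma orbOf_repr {C : OT s} {x : T} : val C = porbit s x -> orbOf s x = C.
Proof. by move=> h; apply: val_inj; rewrite /= h. Qed.

Definition Phi N (g : {ffun OT s -> 'I_N.+1}) : {ffun T -> 'I_N.+1} :=
  [ffun x => g (orbOf s x)].

Lemma Phi_inj N : injective (@Phi N).
Proof.
move=> g1 g2 e; apply/ffunP => C; have [y hy] := OT_ex C.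
rewrite -(orbOf_repr hy).
by have := congr1 (fun f : {ffun T -> 'I_N.+1} => f y) e; rewrite !ffunE.
Qed.

Lemma Hcount N :
  (#|[set f : {ffun T -> 'I_N.+1} | ((\sum_x f x)%N == N) && [forall x, f (s x) == f x]]|)%:R
  = (\prod_(C : OT s) (Gpol N \Po 'X^#|val C|))`_N.
Proof.
rewrite (eq_bigr (fun C : OT s => \sum_(k < N.+1) 1 *: 'X^(#|val C| * k))); last first.
  by move=> C _; rewrite /Gpol comp_poly_XnE.
rewrite coef_prod_sum (eq_bigr (fun=> (1:rat))); last by move=> g _; apply: big1_eq.
rewrite sumr_const.
have -> : [set f : {ffun T -> 'I_N.+1} | ((\sum_x f x)%N == N) && [forall x, f (s x) == f x]]
   = Phi N @: [set g : {ffun OT s -> 'I_N.+1} | (\sum_(C : OT s) #|val C| * g C)%N == N].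
  apply/setP => f; rewrite inE; apply/andP/imsetP.
    move=> [hs /forallP hfix].
    have hF : forall x, f (s x) = f x by move=> x; apply/eqP.
    exists [ffun C : OT s => f (rep C)].
      rewrite inE; apply/eqP; rewrite -[X in _ = X](eqP hs).
      rewrite -(sum_orb (fun C => nat_of_ord ([ffun C : OT s => f (rep C)] C))).
      by apply: eq_bigr => x _; rewrite ffunE /= (fixed_repr hF).
    by apply/ffunP => x; rewrite !ffunE /= (fixed_repr hF).
  move=> [g]; rewrite inE => /eqP hg ->; split.
    rewrite -[X in _ == X]hg -(sum_orb (fun C => nat_of_ord (g C))).
    by apply/eqP; apply: eq_bigr => x _; rewrite ffunE.
  by apply/forallP => x; rewrite !ffunE orbOf_s.
by rewrite (card_imset _ (@Phi_inj N)) cardsE.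
Qed.

Definition Psi (g : {ffun OT s -> bool}) : {set T} := [set x | g (orbOf s x)].

Lemma Psi_inj : injective Psi.
Proof.
move=> g1 g2 e; apply/ffunP => C; have [y hy] := OT_ex C.
rewrite -(orbOf_repr hy).
by have := congr1 (fun S : {set T} => y \in S) e; rewrite !inE.
Qed.

Lemma card_Psi g : #|Psi g| = (\sum_(C : OT s) #|val C| * g C)%N.
Proof.
rewrite -(sum_orb (fun C => nat_of_bool (g C))) -sum1_card big_mkcond /=.
by apply: eq_bigr => x _; rewrite inE; case: (g _).
Qed.

Lemma orbs_Psi g : #|porbit s @: Psi g| = (\sum_(C : OT s) g C)%N.
Proof.
have -> : porbit s @: Psi g = val @: [set C : OT s | g C].
  apply/setP => D; apply/imsetP/imsetP.
    move=> [x]; rewrite inE => hx ->; exists (orbOf s x) => //; by rewrite inE.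
  move=> [C]; rewrite inE => hC ->; have [y hy] := OT_ex C.
  by exists y; rewrite // inE (orbOf_repr hy).
rewrite (card_imset _ val_inj) -sum1_card big_mkcond /=.
by apply: eq_bigr => C _; rewrite inE; case: (g _).
Qed.

Lemma Ecount m :
  \sum_(S : {set T} | (#|S| == m) && [forall x, (s x \in S) == (x \in S)])
      ((-1) ^+ (#|S| + #|porbit s @: S|) : rat)
  = (\prod_(C : OT s) (Ephi #|val C| \Po 'X^#|val C|))`_m.
Proof.
rewrite (eq_bigr (fun C : OT s => \sum_(b : bool)
    (if b then (-1) ^+ (#|val C|.+1) else 1) *: 'X^(#|val C| * b))); last first.
  move=> C _; rewrite big_bool /= /Ephi comp_polyD comp_polyZ comp_polyX -polyC1 comp_polyC.
  by rewrite muln1 muln0 expr0 scale1r polyC1 addrC.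
rewrite coef_prod_sum.
have e : [set S : {set T} | (#|S| == m) && [forall x, (s x \in S) == (x \in S)]]
   = Psi @: [set g : {ffun OT s -> bool} | (\sum_(C : OT s) #|val C| * g C)%N == m].
  apply/setP => S; rewrite inE; apply/andP/imsetP.
    move=> [hs /forallP hinv].
    have hF : forall x, (s x \in S) = (x \in S) by move=> x; apply/eqP.
    have e : Psi [ffun C : OT s => rep C \in S] = S.
      apply/setP => x; rewrite inE ffunE /=.
      exact: (fixed_repr hF).
    exists [ffun C : OT s => rep C \in S] => //.
    by rewrite inE -card_Psi e.
  move=> [g]; rewrite inE => hg ->; split; first by rewrite card_Psi.
  by apply/forallP => x; rewrite !inE orbOf_s.
rewrite (eq_bigl (fun S => S \in Psi @: [set g : {ffun OT s -> bool} |
      (\sum_(C : OT s) #|val C| * g C)%N == m])); last first.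
  by move=> S; rewrite -e inE.
rewrite big_imset; last by move=> ? ? _ _; apply: Psi_inj.
apply: eq_big => [g | g _]; first by rewrite inE.
rewrite card_Psi orbs_Psi.
rewrite (eq_bigr (fun C : OT s => (-1 : rat) ^+ (#|val C|.+1 * g C)%N)); last first.
  by move=> C _; case: (g C); rewrite ?muln1 ?muln0 ?expr0.
rewrite sign_sum; congr (_ ^+ _); rewrite -big_split /=.
by apply: eq_bigr => C _; rewrite mulSn addnC.
Qed.

End Counts.
Lemma cyc_count0 n (s : {perm 'I_n}) : cyc_count s 0%N = 0%N.
Proof.
apply/eqP; rewrite cards_eq0; apply/eqP/setP => C; rewrite !inE.
apply/negbTE/negP => /andP[/imsetP[x _ ->]]; exact/negP/card_porbit_neq0.
Qed.

Lemma cyc_count_big n (s : {perm 'I_n}) i : (n < i)%N -> cyc_count s i = 0%N.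
Proof.
move=> hi; apply/eqP; rewrite cards_eq0; apply/eqP/setP => C; rewrite !inE.
apply/negbTE/negP => /andP[_ /eqP hC].
have := max_card (mem C); rewrite card_ord hC => h.
by have := leq_ltn_trans h hi; rewrite ltnn.
Qed.

Lemma Hpoly_cyc n (s : {perm 'I_n}) N : Hpoly N (cyc_count s) =
  (#|[set f : {ffun 'I_n -> 'I_N.+1} | ((\sum_x f x)%N == N) && [forall x, f (s x) == f x]]|)%:R.
Proof.
rewrite Hcount (group_prod (fun i => Gpol N \Po 'X^i) n) ?card_ord //.
rewrite (@Hpoly_coef N n (cyc_count s)) //; first exact: cyc_count0.
exact: cyc_count_big.
Qed.

Lemma Epoly_cyc n (s : {perm 'I_n}) m : Epoly m (cyc_count s) =
  \sum_(S : {set 'I_n} | (#|S| == m) && [forall x, (s x \in S) == (x \in S)])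
      ((-1) ^+ (#|S| + #|porbit s @: S|) : rat).
Proof.
rewrite Ecount (group_prod (fun i => Ephi i \Po 'X^i) n) ?card_ord //.
rewrite (@Epoly_coef m n (cyc_count s)) //; first exact: cyc_count0.
exact: cyc_count_big.
Qed.
Section Burn.
Variables (T : finType) (N : nat).

Definition Xt := ({ffun T -> 'I_N.+1} * {set T})%type.

Definition pact (x : Xt) (s : {perm T}) : Xt :=
  ([ffun u => x.1 ((s^-1)%g u)], [set u | (s^-1)%g u \in x.2]).

Lemma pact1 : pact^~ 1%g =1 id.
Proof.
move=> [f S]; rewrite /pact /= invg1; congr pair.
  by apply/ffunP => u; rewrite ffunE perm1.
by apply/setP => u; rewrite inE perm1.
Qed.

Lemma pactM x : act_morph pact x.
Proof.
move=> s t; case: x => f S; rewrite /pact /= invMg; congr pair.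
  by apply/ffunP => u; rewrite !ffunE permM.
by apply/setP => u; rewrite !inE permM.
Qed.

Definition pact_action := TotalAction pact1 pactM.

Lemma pact_fix x s : (pact x s == x) =
  [forall u, x.1 (s u) == x.1 u] && [forall u, (s u \in x.2) == (u \in x.2)].
Proof.
case: x => f S /=; apply/eqP/andP => [e | [/forallP h1 /forallP h2]].
  have e1 := congr1 fst e; have e2 := congr1 snd e; rewrite /= in e1 e2.
  split; apply/forallP => u.
    by rewrite -{1}e1 ffunE permK.
  by rewrite -{1}e2 inE permK.
rewrite /pact /=; congr pair.
  by apply/ffunP => w; rewrite ffunE; have := h1 ((s^-1)%g w); rewrite permKV => /eqP.
by apply/setP => w; rewrite inE; have := h2 ((s^-1)%g w); rewrite permKV => /eqP.
Qed.

Definition sgnE (s : {perm T}) (S : {set T}) : rat :=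
  (-1) ^+ (odd_perm s) * (-1) ^+ (#|S| + #|porbit s @: S|).

Definition inj_c (x : Xt) := [forall u, forall v,
  [&& u \notin x.2, v \notin x.2 & x.1 u == x.1 v] ==> (u == v)].


Lemma porbit_agree (s t : {perm T}) (S : {set T}) z :
  (forall w, w \in S -> s w \in S) -> (forall w, w \in S -> t w = s w) ->
  z \in S -> porbit t z = porbit s z.
Proof.
move=> hs ht hz.
have it : forall i, (t ^+ i)%g z = (s ^+ i)%g z /\ (s ^+ i)%g z \in S.
  elim=> [|i [IH1 IH2]]; first by rewrite !expg0 !perm1.
  by rewrite !expgSr !permM IH1 ht //; split => //; apply: hs.
apply/setP => y; apply/porbitP/porbitP => [[i ->]|[i ->]]; exists i; by rewrite (it i).1.
Qed.

Lemma fix_pow (s : {perm T}) w i : s w = w -> (s ^+ i)%g w = w.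
Proof. by move=> h; elim: i => [|i IH]; rewrite ?expg0 ?perm1 // expgSr permM IH. Qed.

Lemma sign_double (k : nat) : (-1 : rat) ^+ (k.*2) = 1.
Proof.
have e2 : (-1 : rat) ^+ 2 = 1 by rewrite expr2 mulrNN mulr1.
by rewrite -mul2n exprM e2 expr1n.
Qed.

Lemma cancel_sum (x : Xt) :
  \sum_(s | pact x s == x) sgnE s x.2 =
  if inj_c x then (#|[set s | pact x s == x]|)%:R else 0.
Proof.
case: x => f S /=; case: ifP => hinj.
  transitivity (\sum_(s | pact (f, S) s == (f, S)) (1 : rat)).
    apply: eq_bigr => s; rewrite pact_fix /= => /andP[/forallP h1 /forallP h2].
    have h1' : forall u, f (s u) = f u by move=> u; apply/eqP.
    have h2' : forall u, (s u \in S) = (u \in S) by move=> u; apply/eqP.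
    have fixc : forall w, w \notin S -> s w = w.
      move=> w hw; have /forallP/(_ (s w))/forallP/(_ w) := hinj.
      by rewrite h2' hw h1' eqxx /= => /eqP.
    have orb1 : forall w, w \notin S -> porbit s w = [set w].
      move=> w hw; apply/setP => y; rewrite inE; apply/porbitP/eqP => [[i ->]|->].
        by rewrite fix_pow // fixc.
      by exists 0%N; rewrite expg0 perm1.
    have hU : porbits s = (porbit s @: S) :|: (porbit s @: ~: S).
      apply/setP => C; rewrite inE; apply/imsetP/orP => [[w _ ->]|].
        by case: (boolP (w \in S)) => hw; [left|right]; apply/imsetP; exists w; rewrite ?inE.
      by case=> /imsetP[w _ ->]; exists w.
    have hI : (porbit s @: S) :&: (porbit s @: ~: S) = set0.
      apply/setP => C; rewrite !inE; apply/negbTE/negP => /andP[/imsetP[z hz ->] /imsetP[w]].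
      rewrite inE => hw; rewrite (orb1 w hw) => e.
      have := porbit_id s z; rewrite e inE => /eqP ezw.
      by move: hz; rewrite ezw (negbTE hw).
    have hC : (porbit s @: ~: S) = [set [set w] | w in ~: S].
      by apply: eq_in_imset => w; rewrite inE => hw; apply: orb1.
    have hcard : #|porbits s| = (#|porbit s @: S| + #|~: S|)%N.
      have := cardsUI (porbit s @: S) (porbit s @: ~: S).
      by rewrite -hU hI cards0 addn0 hC (card_imset _ set1_inj).
    rewrite /sgnE /odd_perm hcard -(cardsC S) signr_addb !signr_odd -!exprD.
    set a := #|S|; set b := #|~: S|; set c := #|porbit s @: S|.
    have -> : ((a + b) + (c + b) + (a + c) = (a + b + c).*2)%N.
      by lia.
    exact: sign_double.
  rewrite -sum1_card natr_sum; apply: eq_bigl => s; by rewrite inE.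
move/negbT: hinj => /forallPn [u /forallPn [v]].
rewrite negb_imply => /andP[/and3P[hu hv /eqP huv] hne].
pose t := tperm u v.
have ht : pact (f, S) t = (f, S).
  apply/eqP; rewrite pact_fix /=; apply/andP; split; apply/forallP => w; rewrite /t.
    by case: tpermP => [->|->|_ _] //; rewrite huv.
  by case: tpermP => [->|->|_ _] //; rewrite (negbTE hu) (negbTE hv).
have hP : forall s, (pact (f, S) (t * s)%g == (f, S)) = (pact (f, S) s == (f, S)).
  by move=> s; rewrite pactM ht.
have hF : forall s, pact (f, S) s == (f, S) -> sgnE (t * s)%g S = - sgnE s S.
  move=> s; rewrite pact_fix /= => /andP[_ /forallP h2].
  have h2' : forall w, w \in S -> s w \in S by move=> w hw; have := h2 w; rewrite hw => /eqP.
  rewrite /sgnE odd_permM odd_tperm hne signr_addb expr1 mulN1r mulNr; congr (- (_ * _)).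
  have ag : forall w, w \in S -> porbit (t * s)%g w = porbit s w.
    move=> w hw; apply: (porbit_agree s (t * s)%g S w) => // w' hw'; rewrite permM /t tpermD //.
      by apply/eqP => e; move: hu; rewrite e /= hw'.
    by apply/eqP => e; move: hv; rewrite e /= hw'.
  have imeq : porbit (t * s)%g @: S = porbit s @: S.
    by apply/setP => C; apply/imsetP/imsetP => -[w hw ->]; exists w; rewrite ?ag.
  by rewrite imeq.
set L := \sum_(s | _) _.
have : L = - L.
  rewrite {1}/L (reindex_inj (mulgI t)) /= (eq_bigl _ _ hP) -sumrN.
  by apply: eq_bigr => s hs; rewrite hF.
move/eqP; rewrite -subr_eq0 opprK -mulr2n mulrn_eq0 /= => /eqP //.
Qed.

End Burn.

Arguments pact {T N}.
Arguments pact1 {T N}.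
Arguments pactM {T N}.
Arguments pact_fix {T N}.
Arguments sgnE {T}.
Arguments inj_c {T N}.
Arguments cancel_sum {T N}.
Section Assemble.
Variables (n N m : nat).
Local Notation T := 'I_n.
Local Notation X := (Xt T N).

Definition Bset (x : X) := ((\sum_(u : T) nat_of_ord (x.1 u))%N == N) && (#|x.2| == m).
Definition Gd := [set x : X | Bset x && inj_c x].

Lemma per_sigma (s : {perm T}) :
  (-1) ^+ odd_perm s * (Hpoly N (cyc_count s) * Epoly m (cyc_count s)) =
  \sum_(x : X | Bset x && (pact x s == x)) sgnE s x.2.
Proof.
rewrite Hpoly_cyc Epoly_cyc -sum1_card natr_sum big_distrl /=.
rewrite (eq_bigr (fun f => \sum_(S : {set T} | (#|S| == m) && [forall x, (s x \in S) == (x \in S)])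
      ((-1) ^+ (#|S| + #|porbit s @: S|) : rat))); last by move=> f _; rewrite mul1r.
rewrite pair_big_dep /= mulr_sumr; apply: eq_big => [[f S] | [f S] _] /=.
  rewrite /Bset pact_fix /= inE.
  by case: (_ == N) => //=; case: (#|S| == m); rewrite /= ?andbF.
by [].
Qed.

Lemma pact_sum (x : X) (s : {perm T}) : (\sum_u (pact x s).1 u)%N = (\sum_u x.1 u)%N.
Proof.
rewrite (reindex_inj (@perm_inj _ s)) /=; apply: eq_bigr => u _.
by rewrite ffunE permK.
Qed.

Lemma pact_card (x : X) (s : {perm T}) : #|(pact x s).2| = #|x.2|.
Proof.
rewrite /=.
have -> : [set u | (s^-1)%g u \in x.2] = s @: x.2.
  apply/setP => u; rewrite inE; apply/idP/imsetP => [h | [w hw ->]]; last by rewrite permK.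
  by exists ((s^-1)%g u) => //; rewrite permKV.
by rewrite card_imset //; apply: perm_inj.
Qed.

Lemma pact_inj_c (x : X) (s : {perm T}) : inj_c x -> inj_c (pact x s).
Proof.
case: x => f S /= /forallP h; apply/forallP => u; apply/forallP => v; rewrite !inE !ffunE.
apply/implyP => /and3P[hu hv e].
have := h ((s^-1)%g u) => /forallP/(_ ((s^-1)%g v)).
by rewrite hu hv e /= => /eqP/perm_inj ->.
Qed.

Lemma pactK (x : X) (s : {perm T}) : pact (pact x s) (s^-1)%g = x.
Proof. by rewrite -pactM mulgV pact1. Qed.

Lemma acts_Gd : [acts [set: {perm T}], on Gd | pact_action T N].
Proof.
apply/actsP => s _ x; rewrite !inE /Bset /= pact_sum pact_card; congr (_ && _).
apply/idP/idP; last exact: pact_inj_c.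
by move=> h; rewrite -(pactK x s); apply: pact_inj_c.
Qed.

Lemma smoment_orbits :
  smoment n (fun X => Hpoly N X * Epoly m X) =
  (#|orbit (pact_action T N) [set: {perm T}] @: Gd|)%:R.
Proof.
rewrite /smoment (eq_bigr _ (fun s _ => per_sigma s)).
rewrite (exchange_big_dep Bset) /=; last by move=> s x _ /andP[].
rewrite (eq_bigr (fun x => \sum_(s | pact x s == x) sgnE s x.2)); last first.
  by move=> x hx; apply: eq_bigl => s; rewrite hx.
rewrite (eq_bigr _ (fun x _ => cancel_sum x)).
have -> : \sum_(x | Bset x) (if inj_c x then (#|[set s | pact x s == x]|)%:R else 0)
    = ((\sum_(x in Gd) #|[set s | pact x s == x]|)%N)%:R :> rat.
  rewrite natr_sum big_mkcond [RHS]big_mkcond /=; apply: eq_bigr => x _.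
  by rewrite inE; case: (Bset x); case: (inj_c x).
have -> : (\sum_(x in Gd) #|[set s | pact x s == x]|)%N =
    (\sum_(s in [set: {perm T}]) #|('Fix_(Gd | pact_action T N)[s])%g|)%N.
  rewrite (eq_bigr (fun x => \sum_(s | pact x s == x) 1)%N); last first.
    by move=> x _; rewrite -sum1_card; apply: eq_bigl => s; rewrite inE.
  rewrite (exchange_big_dep xpredT) //=; apply: eq_big => [s | s _]; first by rewrite inE.
  rewrite -sum1_card; apply: eq_bigl => x; rewrite !inE; congr andb.
  by rewrite sub1set inE.
rewrite Frobenius_Cauchy; last exact: acts_Gd.
rewrite cardsT card_Sn natrM mulrC mulfK //.
by rewrite pnatr_eq0 -lt0n fact_gt0.
Qed.

End Assemble.
Section Canon.
Variables (T : finType) (N : nat).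
Local Notation X := (Xt T N).
Local Notation Key := (bool * 'I_N.+1)%type.

Definition leK : rel Key := fun p q => if p.1 == q.1 then (q.2 <= p.2)%N else p.1.

Lemma leK_total : total leK.
Proof.
move=> [b1 v1] [b2 v2]; rewrite /leK /=.
by case: b1; case: b2 => //=; apply: leq_total.
Qed.

Lemma leK_trans : transitive leK.
Proof.
move=> [b2 v2] [b1 v1] [b3 v3]; rewrite /leK /=.
by case: b1; case: b2; case: b3 => //= h1 h2; apply: leq_trans h2 h1.
Qed.

Lemma leK_anti : antisymmetric leK.
Proof.
move=> [b1 v1] [b2 v2]; rewrite /leK /=.
by case: b1; case: b2 => //= /anti_leq e; congr pair; apply: val_inj; rewrite /= e.
Qed.

Definition key (x : X) (u : T) : Key := (u \in x.2, x.1 u).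
Definition W (x : X) := map (key x) (enum T).
Definition K (x : X) := sort leK (W x).

Lemma key_pact x s u : key (pact x s) u = key x ((s^-1)%g u).
Proof. by rewrite /key /= inE ffunE. Qed.

Lemma K_pact x s : K (pact x s) = K x.
Proof.
apply/(perm_sortP leK_total leK_trans leK_anti).
rewrite /W (eq_map (key_pact x s)) map_comp; apply: perm_map.
apply: uniq_perm; first by rewrite map_inj_uniq ?enum_uniq //; apply: perm_inj.
  exact: enum_uniq.
move=> u; rewrite mem_enum; apply/mapP; exists (s u); by rewrite ?mem_enum ?permK.
Qed.

Lemma pactKV (x : X) (s : {perm T}) : pact (pact x s) (s^-1)%g = x.
Proof. by rewrite -pactM mulgV pact1. Qed.

Lemma K_orbit (x y : X) : K x = K y -> exists s, pact x s = y.
Proof.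
move: x y => [f S] [g S'] e.
set x := (f, S); set y := (g, S').
set ex := sort (relpre (key x) leK) (enum T).
set ey := sort (relpre (key y) leK) (enum T).
have hx : map (key x) ex = K x by rewrite /K /W sort_map.
have hy : map (key y) ey = K y by rewrite /K /W sort_map.
have ux : uniq ex by rewrite sort_uniq enum_uniq.
have uy : uniq ey by rewrite sort_uniq enum_uniq.
have sz : size ex = size ey by rewrite !size_sort.
have memx : forall u, u \in ex by move=> u; rewrite mem_sort mem_enum.
pose phi u := nth u ey (index u ex).
have ix : forall u, (index u ex < size ex)%N by move=> u; rewrite index_mem.
have phi_inj : injective phi.
  move=> u v; rewrite /phi (set_nth_default v u) -?sz // => /eqP.
  rewrite nth_uniq -?sz // => /eqP hi.
  by rewrite -(nth_index u (memx u)) hi (set_nth_default v) ?nth_index.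
have hk : forall u, key y (phi u) = key x u.
  move=> u; rewrite /phi -(nth_map u (key y u)) -?sz // hy -e -hx (nth_map u) //.
  by rewrite nth_index.
exists (perm phi_inj).
rewrite /pact /=; congr pair.
  apply/ffunP => w; rewrite ffunE.
  have := congr1 snd (hk ((perm phi_inj)^-1 w)%g); rewrite /= => <-.
  by congr (g _); rewrite -[in RHS](permKV (perm phi_inj) w) permE.
apply/setP => w; rewrite inE.
have := congr1 fst (hk ((perm phi_inj)^-1 w)%g); rewrite /= => <-.
by rewrite -[in RHS](permKV (perm phi_inj) w) permE.
Qed.

Lemma orbit_K (x y : X) :
  (orbit (pact_action T N) [set: {perm T}] x == orbit (pact_action T N) [set: {perm T}] y)
  = (K x == K y).
Proof.
apply/eqP/eqP => [e | e].
  have : y \in orbit (pact_action T N) [set: {perm T}] x by rewrite e orbit_refl.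
  by case/orbitP => a _ /= <-; rewrite K_pact.
have [s hs] := K_orbit x y e.
apply/orbit_eqP/orbitP; exists (s^-1)%g; first by rewrite inE.
by rewrite /= -hs pactKV.
Qed.

End Canon.

Lemma card_imset_same (A : finType) (Y1 Y2 : finType) (D : {set A}) (F : A -> Y1) (H : A -> Y2) :
  (forall x y, (F x == F y) = (H x == H y)) -> #|F @: D| = #|H @: D|.
Proof.
move=> hFH; pose P := [set (F x, H x) | x in D].
have e1 : F @: D = fst @: P by rewrite -imset_comp.
have e2 : H @: D = snd @: P by rewrite -imset_comp.
rewrite e1 e2 (@card_in_imset _ _ fst P) ?(@card_in_imset _ _ snd P) //.
  move=> [a1 b1] [a2 b2] /imsetP[x hx] [] -> -> /imsetP[y hy] [] -> -> /= e.
  have := hFH x y; rewrite e eqxx.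
  by first [ move=> /esym/eqP -> | move=> /eqP -> ].
move=> [a1 b1] [a2 b2] /imsetP[x hx] [] -> -> /imsetP[y hy] [] -> -> /= e.
have := hFH x y; rewrite e eqxx.
by first [ move=> /esym/eqP -> | move=> /eqP -> ].
Qed.
Arguments leK {N}.
Arguments leK_total {N}.
Arguments leK_trans {N}.
Arguments leK_anti {N}.
Arguments key {T N}.
Arguments W {T N}.
Arguments K {T N}.

Lemma split_sorted N (s : seq (bool * 'I_N.+1)) :
  sorted leK s -> s = filter fst s ++ filter (predC fst) s.
Proof.
elim: s => //= a s IH hs.
have hs' := path_sorted hs.
case: a hs => [b v] hs /=; case: b hs => hs /=; first by rewrite {1}(IH hs').
have hall : all (predC fst) s.
  apply: sub_all (order_path_min leK_trans hs) => -[b' v'].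
  by rewrite /leK /=; case: b'.
have -> : filter fst s = [::].
  by apply/eqP; rewrite -size_eq0 size_filter eqn0Ngt -has_count -all_predC.
by have /all_filterP -> := hall.
Qed.

Lemma sorted_gtn_of (s : seq nat) : sorted geq s -> uniq s -> sorted gtn s.
Proof.
have tg : transitive geq by move=> y x z h1 h2; apply: leq_trans h2 h1.
have tt : transitive gtn by move=> y x z h1 h2; apply: ltn_trans h2 h1.
rewrite (sorted_pairwise tg) (sorted_pairwise tt).
elim: s => //= a s IH /andP[ha hs] /andP[na us]; rewrite IH // andbT.
apply/allP => b hb; have := allP ha b hb; rewrite /= ltn_neqAle => ->; rewrite andbT.
by apply: contraNneq na => <-.
Qed.

Lemma sumn_filter (A : Type) (g : A -> nat) (a : pred A) s :
  (sumn (map g (filter a s)) + sumn (map g (filter (predC a) s)) = sumn (map g s))%N.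
Proof.
elim: s => //= x s IH; case: (a x) => /=; rewrite -IH; lia.
Qed.

Lemma card_count (T : finType) (A : {set T}) : #|A| = count (mem A) (enum T).
Proof. rewrite cardE /enum_mem size_filter count_filter; apply: eq_count => x; by rewrite /= andbT. Qed.

Lemma W_card (T : finType) N (x : Xt T N) : #|x.2| = count fst (W x).
Proof. by rewrite /W count_map card_count. Qed.

Lemma W_sum (T : finType) N (x : Xt T N) :
  (\sum_u nat_of_ord (x.1 u))%N = sumn (map (fun q => nat_of_ord q.2) (W x)).
Proof. by rewrite /W -map_comp sumnE big_map big_enum. Qed.
Section PC.
Variables (n N m : nat).
Hypothesis hmn : (m <= n)%N.
Local Notation T := 'I_n.
Local Notation Key := (bool * 'I_N.+1)%type.
Local Notation PT := (m.-tuple 'I_N.+1 * (n - m).-tuple 'I_N.+1)%type.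

Definition Phi2 (p : PT) : seq Key := map (pair true) p.1 ++ map (pair false) p.2.

Definition PS := [set p : PT | [&& sorted geq (map val p.1), sorted gtn (map val p.2) &
          (sumn (map val p.1) + sumn (map val p.2) == N)%N]].

Lemma Phi2_inj : injective Phi2.
Proof.
move=> [a1 b1] [a2 b2] /eqP; rewrite /Phi2 eqseq_cat ?size_map ?size_tuple //.
move=> /andP[/eqP e1 /eqP e2]; congr pair; apply: val_inj.
  by apply: (inj_map _ e1) => u v [].
by apply: (inj_map _ e2) => u v [].
Qed.

Lemma size_Phi2 p : size (Phi2 p) == #|T|.
Proof. by rewrite /Phi2 size_cat !size_map !size_tuple subnKC // card_ord. Qed.

Definition Phi2T (p : PT) : #|T|.-tuple Key := Tuple (size_Phi2 p).

Lemma size_K (x : Xt T N) : size (K x) == #|T|.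
Proof. by rewrite size_sort size_map -cardE. Qed.

Definition KT (x : Xt T N) : #|T|.-tuple Key := Tuple (size_K x).

Lemma Phi2T_inj : injective Phi2T.
Proof. by move=> p q /(congr1 val) /= /Phi2_inj. Qed.

Lemma sorted_pair_geq b (L : seq 'I_N.+1) :
  sorted leK (map (pair b) L) = sorted geq (map val L).
Proof.
rewrite !sorted_map; apply: eq_sorted => u v; by rewrite /leK /= eqxx.
Qed.

Lemma K_in (x : Xt T N) : x \in Gd n N m -> KT x \in Phi2T @: PS.
Proof.
rewrite inE /Bset => /andP[/andP[/eqP hsum /eqP hcard] hinj].
set s := K x.
have hs : sorted leK s by apply: sort_sorted; apply: leK_total.
have hp : perm_eq s (W x) by rewrite /s /K perm_sort.
have hsplit := @split_sorted N s hs.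
set L1 := map snd (filter fst s); set L2 := map snd (filter (predC fst) s).
have hL1 : map (pair true) L1 = filter fst s.
  rewrite /L1 -map_comp; apply: map_id_in => -[b v]; rewrite mem_filter /=.
  by case: b.
have hL2 : map (pair false) L2 = filter (predC fst) s.
  rewrite /L2 -map_comp; apply: map_id_in => -[b v]; rewrite mem_filter /=.
  by case: b.
have sW : size (W x) = n by rewrite /W size_map -cardE card_ord.
have c1 : count fst s = m by rewrite (seq.permP hp) -W_card hcard.
have sz1 : size L1 == m by rewrite /L1 size_map size_filter c1.
have sz2 : size L2 == (n - m)%N.
  have e : count (predC fst) s = (size s - count fst s)%N by rewrite -(count_predC fst s) addKn.
  by rewrite /L2 size_map size_filter e c1 (perm_size hp) sW.
apply/imsetP; exists (Tuple sz1, Tuple sz2); last by apply: val_inj; rewrite /= /Phi2 /= hL1 hL2 -hsplit.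
rewrite inE /=; apply/and3P; split.
- by rewrite -(sorted_pair_geq true) hL1 sorted_filter //; apply: leK_trans.
- apply: sorted_gtn_of; first by rewrite -(sorted_pair_geq false) hL2 sorted_filter //; apply: leK_trans.
  rewrite map_inj_uniq; last exact: val_inj.
  rewrite /L2 map_inj_in_uniq.
    rewrite (perm_uniq (perm_filter _ hp)) /W filter_map map_inj_in_uniq.
      by apply: filter_uniq; apply: enum_uniq.
    move=> u v; rewrite !mem_filter /= => /andP[hu _] /andP[hv _] e.
    have /forallP/(_ u)/forallP/(_ v) := hinj.
    have e2 := congr1 snd e; rewrite /= in e2.
    by rewrite hu hv e2 eqxx /= => /eqP.
  move=> [b1 v1] [b2 v2]; rewrite !mem_filter /= => /andP[hb1 _] /andP[hb2 _] ->.
  by move: hb1 hb2; case: b1; case: b2.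
- rewrite /L1 /L2 -!map_comp (@sumn_filter _ (nat_of_ord (n:=N.+1) \o snd) fst s).
  by rewrite (perm_sumn (perm_map _ hp)); apply/eqP; rewrite -[RHS]hsum W_sum.
Qed.


Lemma K_out p : p \in PS -> Phi2T p \in KT @: Gd n N m.
Proof.
rewrite inE => /and3P[h1 h2 /eqP h3].
set L := (p.1 : seq _) ++ (p.2 : seq _).
pose x : Xt T N := ([ffun i : T => nth ord0 L i], [set i : T | (i < m)%N]).
have hW : W x = Phi2 p.
  apply: (@eq_from_nth _ (true, ord0)).
    by rewrite /W size_map size_enum_ord size_cat !size_map !size_tuple subnKC.
  move=> i; rewrite /W size_map size_enum_ord => hi.
  rewrite (nth_map (Ordinal hi)) ?size_enum_ord //.
  have vi : nat_of_ord (nth (Ordinal hi) (enum 'I_n) i) = i by rewrite nth_enum_ord.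
  rewrite /key /= inE ffunE vi /Phi2 nth_cat size_map size_tuple.
  case: ifP => him.
    by rewrite (nth_map ord0) ?size_tuple // /L nth_cat size_tuple him.
  have hb : (i - m < n - m)%N.
    by move/negbT: him; rewrite -leqNgt => him; lia.
  by rewrite (nth_map ord0) ?size_tuple // /L nth_cat size_tuple him.
have hsortp : sorted leK (Phi2 p).
  rewrite (sorted_pairwise leK_trans) pairwise_cat; apply/and3P; split.
  - by apply/allrelP => a b /mapP[u _ ->] /mapP[v _ ->].
  - by rewrite -(sorted_pairwise leK_trans) sorted_pair_geq.
  - rewrite -(sorted_pairwise leK_trans) sorted_pair_geq.
    by apply: (sub_sorted _ h2) => u v /ltnW.
have hK : K x = Phi2 p by rewrite /K hW sorted_sort //; apply: leK_trans.
apply/imsetP; exists x; last by apply: val_inj; rewrite /= hK.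
rewrite inE /Bset; apply/andP; split; first (apply/andP; split).
- apply/eqP; rewrite W_sum hW /Phi2 map_cat sumn_cat -!map_comp -[RHS]h3.
  by [].
- rewrite W_card hW /Phi2 count_cat !count_map.
  rewrite (@eq_count _ _ predT) // count_predT size_tuple.
  by rewrite (@eq_count _ _ pred0) // count_pred0 addn0.
- have up : uniq (p.2 : seq _).
    apply: (@map_uniq _ _ val); apply: (sorted_uniq _ _ h2).
      by move=> a b c h h'; apply: ltn_trans h' h.
    by move=> a; rewrite /= ltnn.
  apply/forallP => u; apply/forallP => v; apply/implyP.
  rewrite !inE -!leqNgt !ffunE /= => /and3P[hu hv e].
  move: e; rewrite /L !nth_cat !size_tuple ltnNge hu ltnNge hv /=.
  rewrite nth_uniq ?size_tuple //; last first.
  - by have := ltn_ord v; lia.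
  - by have := ltn_ord u; lia.
  move=> /eqP e; apply/eqP; apply: val_inj; change (nat_of_ord u = nat_of_ord v); lia.
Qed.

Lemma card_KT : #|KT @: Gd n N m| = pair_count m (n - m) N.
Proof.
have -> : KT @: Gd n N m = Phi2T @: PS.
  apply/setP => q; apply/imsetP/idP => [[x hx ->] | ]; first exact: K_in.
  by case/imsetP => p hp ->; apply/imsetP; apply: K_out.
by rewrite (card_imset _ Phi2T_inj).
Qed.

End PC.
Lemma smoment_pc n N m : (m <= n)%N ->
  smoment n (fun X => Hpoly N X * Epoly m X) = (pair_count m (n - m) N)%:R.
Proof.
move=> hmn; rewrite smoment_orbits.
rewrite (@card_imset_same _ _ _ (Gd n N m) (orbit (pact_action 'I_n N) [set: {perm 'I_n}]) (KT n N)).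
  by rewrite card_KT.
by move=> x y; rewrite orbit_K -[RHS]val_eqE.
Qed.

Theorem proposition3p8 (a b j n : nat) (hj : (j <= b)%N) (hn : (b.+1 <= n)%N) :
  smoment n (fun X => Hpoly (a + 1 + j) X * Epoly (b - j) X)
  = (pair_count (b - j) (n - b + j) (a + 1 + j))%:R.
Proof.
have hmn : (b - j <= n)%N by lia.
rewrite (@smoment_pc n (a + 1 + j) (b - j) hmn).
by have -> : (n - (b - j) = n - b + j)%N by lia.
Qed.
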